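(* Let $\kappa$ be an uncountable regular cardinal and let $\mathcal{I}$ be a $\kappa$-complete proper ideal on $\kappa$ containing every bounded subset of $\kappa$ and having a basis of size $\kappa$. Let $\langle B_\alpha:\alpha<\kappa\rangle$ be an approximation sequence of $\mathcal{I}$, and let $A\subseteq\kappa$ be unbounded. If $f\colon{}^{\kappa}\kappa\to{}^{\kappa}\kappa$ is $A$-recursive over $\langle B_\alpha:\alpha<\kappa\rangle$, then $f$ is continuous with respect to $\tau_{\mathcal{I}}$ on both sides.
   Context: A basis for $\mathcal{I}$ is a family $\mathcal{B}\subseteq\mathcal{I}$ such that every member of $\mathcal{I}$ is contained in a member of $\mathcal{B}$. An approximation sequence of $\mathcal{I}$ is a sequence $\langle B_\alpha:\alpha<\kappa\rangle$ of members of $\mathcal{I}$ with $B_0=\emptyset$, $B_\alpha\subsetneq B_\beta$ for $\alpha<\beta$, $B_\alpha=\bigcup_{\beta<\alpha}B_\beta$ for limit $\alpha$, and such that every $B\in\mathcal{I}$ satisfies $B\subsetneq B_\alpha$ for some $\alpha$. $\mathrm{Fn}_{\mathcal{I}}$ is the set of functions $D\to\kappa$ with $D\in\mathcal{I}$; $\tau_{\mathcal{I}}$ on ${}^{\kappa}\kappa$ is generated by the sets $\mathbf{N}_g=\{x:g\subseteq x\}$, $g\in\mathrm{Fn}_{\mathcal{I}}$. $H\colon\mathrm{Fn}_{\mathcal{I}}\to\mathrm{Fn}_{\mathcal{I}}$ is monotone if $g\subseteq h$ implies $H(g)\subseteq H(h)$. $f$ is $A$-recursive over $\langle B_\alpha\rangle$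 if there is a monotone $H\colon\mathrm{Fn}_{\mathcal{I}}\to\mathrm{Fn}_{\mathcal{I}}$ such that for every $\alpha\in A$ and every $x\in{}^{\kappa}\kappa$, $f(x)(\theta)=H(x\restriction B_\alpha)(\theta)$ for all $\theta\in B_{\alpha'}\cup(A\cap\alpha')$, where $\alpha'=\min(A\setminus(\alpha+1))$. *)

(* Defs.v *)
(* kappa is modelled as a type K carrying a strict well-order
   [lt] whose order type is an uncountable regular cardinal. *)

Definition pset (T : Type) := T -> Prop.

Definition subset {T : Type} (X Y : pset T) : Prop := forall x, X x -> Y x.
Definition psubset {T : Type} (X Y : pset T) : Prop :=
  subset X Y /\ exists x, Y x /\ ~ X x.

Definition injective {A B : Type} (f : A -> B) : Prop :=
  forall x y, f x = f y -> x = y.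

Definition card_lt (J K : Type) : Prop :=
  (exists f : J -> K, injective f) /\ ~ (exists g : K -> J, injective g).

Definition le {K : Type} (lt : K -> K -> Prop) (a b : K) : Prop := lt a b \/ a = b.

Definition strict_wellorder {K : Type} (lt : K -> K -> Prop) : Prop :=
  (forall a, ~ lt a a) /\
  (forall a b c, lt a b -> lt b c -> lt a c) /\
  (forall a b, lt a b \/ a = b \/ lt b a) /\
  well_founded lt.

(* the order type is a cardinal: every proper initial segment is smaller *)
Definition is_cardinal {K : Type} (lt : K -> K -> Prop) : Prop :=
  forall a : K, card_lt {b : K | lt b a} K.

Definition uncountable (K : Type) : Prop :=
  ~ (exists g : K -> nat, injective g).

Definition bounded {K : Type} (lt : K -> K -> Prop) (X : pset K) : Prop :=
  exists a, forall b, X b -> lt b a.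

Definition regular {K : Type} (lt : K -> K -> Prop) : Prop :=
  forall X : pset K, card_lt {x : K | X x} K -> bounded lt X.

Definition is_limit {K : Type} (lt : K -> K -> Prop) (a : K) : Prop :=
  (exists b, lt b a) /\ (forall b, lt b a -> exists c, lt b c /\ lt c a).

Definition is_ideal {K : Type} (I : pset (pset K)) : Prop :=
  I (fun _ => False) /\
  (forall X Y, I Y -> subset X Y -> I X) /\
  (forall X Y, I X -> I Y -> I (fun x => X x \/ Y x)).

Definition kappa_complete {K : Type} (I : pset (pset K)) : Prop :=
  forall (J : Type) (F : J -> pset K),
    card_lt J K -> (forall j, I (F j)) -> I (fun x => exists j, F j x).

Definition proper_ideal {K : Type} (I : pset (pset K)) : Prop :=
  ~ I (fun _ => True).

Definition contains_bounded {K : Type} (lt : K -> K -> Prop) (I : pset (pset K)) : Prop :=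
  forall X, bounded lt X -> I X.

Definition is_basis {K : Type} (I : pset (pset K)) (Bs : pset (pset K)) : Prop :=
  (forall B, Bs B -> I B) /\ (forall X, I X -> exists B, Bs B /\ subset X B).

Definition has_basis_of_size_kappa {K : Type} (I : pset (pset K)) : Prop :=
  exists b : K -> pset K, injective b /\ is_basis I (fun B => exists a, b a = B).

Definition approximation_sequence {K : Type} (lt : K -> K -> Prop)
    (I : pset (pset K)) (B : K -> pset K) : Prop :=
  (forall a, I (B a)) /\
  (forall z, (forall a, le lt z a) -> forall x, ~ B z x) /\
  (forall a b, lt a b -> psubset (B a) (B b)) /\
  (forall a, is_limit lt a -> forall x, B a x <-> exists b, lt b a /\ B b x) /\
  (forall X, I X -> exists a, psubset X (B a)).

Definition pfun (K : Type) := K -> option K.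

Definition dom {K : Type} (g : pfun K) : pset K := fun t => g t <> None.

Definition in_Fn {K : Type} (I : pset (pset K)) (g : pfun K) : Prop := I (dom g).

Definition psub {K : Type} (g h : pfun K) : Prop :=
  forall t v, g t = Some v -> h t = Some v.

Definition N {K : Type} (g : pfun K) : pset (K -> K) :=
  fun x => forall t v, g t = Some v -> x t = v.

Definition is_restriction {K : Type} (x : K -> K) (D : pset K) (r : pfun K) : Prop :=
  forall t, (D t -> r t = Some (x t)) /\ (~ D t -> r t = None).

Definition is_topology {X : Type} (T : pset (pset X)) : Prop :=
  T (fun _ => True) /\
  (forall U V, T U -> T V -> T (fun x => U x /\ V x)) /\
  (forall F : pset (pset X), (forall U, F U -> T U) -> T (fun x => exists U, F U /\ U x)).

Definition tau_open {K : Type} (I : pset (pset K)) (U : pset (K -> K)) : Prop :=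
  forall T : pset (pset (K -> K)), is_topology T ->
    (forall g, in_Fn I g -> T (N g)) -> T U.

Definition tau_continuous {K : Type} (I : pset (pset K)) (f : (K -> K) -> (K -> K)) : Prop :=
  forall U, tau_open I U -> tau_open I (fun x => U (f x)).

Definition A_recursive {K : Type} (lt : K -> K -> Prop) (I : pset (pset K))
    (B : K -> pset K) (A : pset K) (f : (K -> K) -> (K -> K)) : Prop :=
  exists H : pfun K -> pfun K,
    (forall g, in_Fn I g -> in_Fn I (H g)) /\
    (forall g h, in_Fn I g -> in_Fn I h -> psub g h -> psub (H g) (H h)) /\
    (forall a a', A a -> A a' -> lt a a' ->
       (* a' = min (A \ (a+1)) *)
       (forall c, A c -> lt a c -> le lt a' c) ->
       forall (x : K -> K) (r : pfun K), is_restriction x (B a) r ->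
       forall t, (B a' t \/ (A t /\ lt t a')) -> H r t = Some (f x t)).

(* Main.v *)
Require Import Defs.
From Stdlib Require Import Classical ClassicalEpsilon FunctionalExtensionality PropExtensionality.

Lemma wf_min {K : Type} (lt : K -> K -> Prop) (Hwf : well_founded lt) (P : K -> Prop) :
  (exists c, P c) -> exists m, P m /\ forall c, P c -> ~ lt c m.
Proof.
  intros [c Hc]. apply NNPP. intro Hn.
  assert (forall z, ~ P z) as Hall.
  { intro z. induction (Hwf z) as [z _ IH]. intro Hz. apply Hn. exists z. split; auto.
    intros c' Hc' Hlt. exact (IH c' Hlt Hc'). }
  exact (Hall c Hc).
Qed.

Lemma key (K : Type) (lt : K -> K -> Prop) (I : pset (pset K))
  (B : K -> pset K) (A : pset K) (f : (K -> K) -> (K -> K))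
  (Hwo : strict_wellorder lt) (Hideal : is_ideal I)
  (Happrox : approximation_sequence lt I B)
  (HA : ~ bounded lt A)
  (Hf : A_recursive lt I B A f) :
  forall g, in_Fn I g -> forall x, N g (f x) ->
   exists h, in_Fn I h /\ N h x /\ forall y, N h y -> N g (f y).
Proof.
  intros g Hg x Hx.
  destruct Happrox as [HBI [_ [Hinc [_ Hcof]]]].
  destruct Hwo as [Hirr [Htr [Htri Hwf]]].
  destruct Hideal as [_ [Hdown _]].
  destruct Hf as [H [_ [_ Hrec]]].
  assert (Hunb : forall b, exists c, A c /\ ~ lt c b).
  { intro b. apply NNPP. intro Hn. apply HA. exists b. intros c Hc.
    apply NNPP. intro. apply Hn. eauto. }
  assert (Hle : forall b c, ~ lt c b -> b = c \/ lt b c).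
  { intros b c Hnc. destruct (Htri b c) as [h|[h|h]]; auto. contradiction. }
  destruct (Hcof (dom g) Hg) as [a [Hsub _]].
  destruct (Hunb a) as [al [HAal Hal]].
  destruct (Hcof (B al) (HBI al)) as [a2 [Hs2 [w [Hw1 Hw2]]]].
  assert (Hlt2 : lt al a2).
  { destruct (Htri al a2) as [h|[h|h]]; auto.
    - subst. contradiction.
    - destruct (Hinc _ _ h) as [_ [w' [Hw'1 Hw'2]]]. exfalso. apply Hw'2. auto. }
  destruct (Hunb a2) as [c [HAc Hc]].
  assert (Hltc : lt al c).
  { destruct (Hle _ _ Hc) as [e|e]; [subst; auto | eauto]. }
  destruct (wf_min lt Hwf (fun c => A c /\ lt al c)) as [m [[HAm Hltm] Hmin]].
  { eauto. }
  assert (Hmin' : forall c, A c -> lt al c -> le lt m c).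
  { intros c' H1 H2. unfold le. destruct (Htri m c') as [h|[h|h]]; auto.
    exfalso. exact (Hmin c' (conj H1 H2) h). }
  assert (HsubB : forall t, dom g t -> B m t).
  { intros t Ht. apply Hsub in Ht.
    assert (B al t).
    { destruct (Hle _ _ Hal) as [e|e]; [subst; auto|].
      destruct (Hinc _ _ e) as [S _]. auto. }
    destruct (Hinc _ _ Hltm) as [S _]. auto. }
  set (r := fun (y : K -> K) (t : K) =>
          if excluded_middle_informative (B al t) then Some (y t) else None).
  assert (Hres : forall y, is_restriction y (B al) (r y)).
  { intros y t. unfold r. destruct (excluded_middle_informative (B al t)); split; intros; tauto. }
  assert (HH : forall y t, dom g t -> H (r y) t = Some (f y t)).
  { intros y t Ht. apply (Hrec al m HAal HAm Hltm Hmin' y (r y) (Hres y) t).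
    left. auto. }
  exists (r x). split; [|split].
  - unfold in_Fn. apply (Hdown _ (B al) (HBI al)). intros t Ht.
    unfold dom, r in Ht. destruct (excluded_middle_informative (B al t)); auto.
    contradiction.
  - intros t v Hv. unfold r in Hv.
    destruct (excluded_middle_informative (B al t)); inversion Hv; auto.
  - intros y Hy t v Hgt.
    assert (Hr : r y = r x).
    { apply functional_extensionality. intro t0. unfold r.
      destruct (excluded_middle_informative (B al t0)) as [b|b]; auto.
      f_equal. apply Hy. unfold r.
      destruct (excluded_middle_informative (B al t0)); [reflexivity|contradiction]. }
    assert (Hd : dom g t) by (unfold dom; rewrite Hgt; discriminate).
    pose proof (HH y t Hd) as E1. pose proof (HH x t Hd) as E2.
    rewrite Hr, E2 in E1. injection E1 as E1. rewrite <- E1. apply Hx. auto.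
Qed.

Theorem fact6p2 (K : Type) (lt : K -> K -> Prop) (I : pset (pset K))
  (B : K -> pset K) (A : pset K) (f : (K -> K) -> (K -> K))
  (Hwo : strict_wellorder lt) (Hcard : is_cardinal lt) (Hunc : uncountable K)
  (Hreg : regular lt)
  (Hideal : is_ideal I) (Hcomp : kappa_complete I) (Hprop : proper_ideal I)
  (Hbdd : contains_bounded lt I) (Hbasis : has_basis_of_size_kappa I)
  (Happrox : approximation_sequence lt I B)
  (HA : ~ bounded lt A)
  (Hf : A_recursive lt I B A f) :
  tau_continuous I f.
Proof.
  intros U HU T HT HN.
  destruct HT as [HT1 [HT2 HT3]].
  apply (HU (fun V => T (fun x => V (f x)))).
  - split; [exact HT1|split].
    + intros U1 V1 H1 H2. exact (HT2 _ _ H1 H2).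
    + intros F HF.
      pose (F' := fun W : pset (K -> K) => exists U0, F U0 /\ W = (fun x => U0 (f x))).
      assert (E : (fun x => exists U0, F U0 /\ U0 (f x)) = (fun x => exists W, F' W /\ W x)).
      { apply functional_extensionality. intro x. apply propositional_extensionality.
        split.
        - intros [U0 [H1 H2]]. exists (fun x => U0 (f x)). split; auto. exists U0; auto.
        - intros [W [[U0 [H1 H2]] H3]]. subst. exists U0; auto. }
      simpl. rewrite E. apply HT3. intros W [U0 [H1 H2]]. subst. apply HF. auto.
  - intros g Hg. simpl.
    pose (G := fun W : pset (K -> K) => exists h, in_Fn I h /\ W = N h /\
                  (forall y, N h y -> N g (f y))).
    assert (E : (fun x => N g (f x)) = (fun x => exists W, G W /\ W x)).
    { apply functional_extensionality. intro x. apply propositional_extensionality.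
      split.
      - intro Hx. destruct (key K lt I B A f Hwo Hideal Happrox HA Hf g Hg x Hx)
          as [h [H1 [H2 H3]]].
        exists (N h). split; auto. exists h; auto.
      - intros [W [[h [H1 [H2 H3]]] H4]]. subst. auto. }
    rewrite E. apply HT3. intros W [h [H1 [H2 _]]]. subst. apply HN. auto.
Qed.
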